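(* Let $G$ be a finite simple graph on $[d]$, $k\ge1$, and let $f,g$ be $k$-colorings of an induced subgraph $G_0$ of $G$. Then $f\sim_k g$ if and only if ${\bf x}_f-{\bf x}_g\in K_G$.
   Context: A $k$-coloring of a graph $H$ is a map $f:V(H)\to[k]$ (not necessarily surjective) with $f(u)\neq f(v)$ for every edge. A Kempe switching: for colors $i<j$ and a connected component $C$ of $H[f^{-1}(i)\cup f^{-1}(j)]$, interchange $i$ and $j$ on $C$. $f\sim_k g$ if $g$ is obtained from $f$ by a finite sequence of Kempe switchings. A stable set of $G$ is a subset of $[d]$ with no edge of $G$ (including $\emptyset$ and singletons); $S(G)$ is the set of stable sets; $R[G]=\mathbb{K}[x_S : S\in S(G)]$ over a field $\mathbb{K}$. For a $k$-coloring $f$ of an induced subgraph, ${\bf x}_f=\prod_{\ell=1}^k x_{f^{-1}(\ell)}$. $J_G$ is the ideal generated by all ${\bf x}_f-{\bf x}_g$ with $f,g$ $2$-colorings of a common induced subgraph of $G$; $M_G=\langle x_Sx_T : S,T\in S(G),\ S\cap T\neq\emptyset\rangle$; $K_G=J_G+M_G$. *)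

(* Defs.v *)
From HB Require Import structures.
From mathcomp Require Import all_boot all_algebra.
From mathcomp Require Import mpoly.
From Stdlib Require Import Relations.

Set Implicit Arguments.
Unset Strict Implicit.
Unset Printing Implicit Defensive.

Import GRing.Theory.
Local Open Scope ring_scope.

(* A finite simple graph on [d] = 'I_d is a symmetric irreflexive G : rel 'I_d
   (these two properties are hypotheses of the theorem). *)

Definition stableb (d : nat) (G : rel 'I_d) (S : {set 'I_d}) : bool :=
  [forall u in S, forall v in S, ~~ G u v].

Definition stab (d : nat) (G : rel 'I_d) := {S : {set 'I_d} | stableb G S}.

Definition nvars (d : nat) (G : rel 'I_d) : nat := #|{: stab G}|.

(* The variable x_S of R[G] = {mpoly K[nvars G]}, the variables being labelled
   by the stable sets via the bijection enum_rank.  (Junk value 0 if S is not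
   stable; only used on stable sets.) *)
Definition xS (K : fieldType) (d : nat) (G : rel 'I_d) (S : {set 'I_d})
  : {mpoly K[nvars G]} :=
  match (insub S : option (stab G)) with
  | Some s => 'X_(enum_rank s)
  | None => 0
  end.

(* A partial map f : 'I_d -> option 'I_k is a k-coloring of the induced
   subgraph G[V0] when its domain is exactly V0 and it is proper on G[V0]. *)
Definition coloring (d k : nat) (G : rel 'I_d) (V0 : {set 'I_d})
  (f : {ffun 'I_d -> option 'I_k}) : bool :=
  [forall v, (f v != None) == (v \in V0)] &&
  [forall u, forall v, [&& G u v, u \in V0 & v \in V0] ==> (f u != f v)].

Definition colclass (d k : nat) (f : {ffun 'I_d -> option 'I_k}) (l : 'I_k)
  : {set 'I_d} := [set v | f v == Some l].

Definition xf (K : fieldType) (d k : nat) (G : rel 'I_d)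
  (f : {ffun 'I_d -> option 'I_k}) : {mpoly K[nvars G]} :=
  \prod_(l < k) xS K G (colclass f l).

Definition ideal_gen (n : nat) (K : fieldType) (P : {mpoly K[n]} -> Prop)
  (p : {mpoly K[n]}) : Prop :=
  exists s : seq ({mpoly K[n]} * {mpoly K[n]}),
    (forall q, q \in s -> P q.2) /\ p = \sum_(q <- s) q.1 * q.2.

Definition JG_gen (K : fieldType) (d : nat) (G : rel 'I_d)
  (p : {mpoly K[nvars G]}) : Prop :=
  exists (V0 : {set 'I_d}) (f g : {ffun 'I_d -> option 'I_2}),
    coloring G V0 f /\ coloring G V0 g /\ p = xf K G f - xf K G g.

Definition MG_gen (K : fieldType) (d : nat) (G : rel 'I_d)
  (p : {mpoly K[nvars G]}) : Prop :=
  exists S T : {set 'I_d},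
    stableb G S /\ stableb G T /\ S :&: T != set0 /\ p = xS K G S * xS K G T.

Definition JG K d G := ideal_gen (@JG_gen K d G).
Definition MG K d G := ideal_gen (@MG_gen K d G).

Definition KG (K : fieldType) (d : nat) (G : rel 'I_d) (p : {mpoly K[nvars G]})
  : Prop :=
  exists a b, @JG K d G a /\ @MG K d G b /\ p = a + b.

Definition swapc (k : nat) (i j : 'I_k) (o : option 'I_k) : option 'I_k :=
  match o with
  | Some c => Some (if c == i then j else if c == j then i else c)
  | None => None
  end.

Definition kempe_step (d k : nat) (G : rel 'I_d)
  (f g : {ffun 'I_d -> option 'I_k}) : Prop :=
  exists (i j : 'I_k) (x : 'I_d),
    (i < j)%N /\
    let W := [set v | (f v == Some i) || (f v == Some j)] in
    x \in W /\
    let C := [set y | connect [rel u v | [&& u \in W, v \in W & G u v]] x y] in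
    forall v, g v = if v \in C then swapc i j (f v) else f v.

Definition kempe_equiv (d k : nat) (G : rel 'I_d) :=
  clos_refl_trans _ (@kempe_step d k G).

Arguments xS K {d} G S.
Arguments xf K {d k} G f.
Arguments KG K {d} G p.
Arguments JG K {d} G p.
Arguments MG K {d} G p.

(* Main.v *)
Require Import Defs.
From mathcomp Require Import all_boot all_algebra all_fingroup.
From mathcomp Require Import mpoly.
From Stdlib Require Import Relations ClassicalEpsilon.
Local Open Scope ring_scope.

Set Implicit Arguments.
Unset Strict Implicit.
Unset Printing Implicit Defensive.
Import GRing.Theory.

Local Close Scope ring_scope.


Section Kempe.
Variables (d k : nat) (G : rel 'I_d).
Hypotheses (Gsym : ssrbool.symmetric G) (Girr : irreflexive G).
Local Notation CT := {ffun 'I_d -> option 'I_k}.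

Definition Wset (h : CT) (i j : 'I_k) := [set v | (h v == Some i) || (h v == Some j)].
Definition Rel (W : {set 'I_d}) := [rel u v | [&& u \in W, v \in W & G u v]].
Definition Cset h i j x := [set y | connect (Rel (Wset h i j)) x y].

Lemma kempe_stepE (h h' : CT) : kempe_step G h h' <->
  exists (i j : 'I_k) x, (i < j)%N /\ x \in Wset h i j /\
   forall v, h' v = if v \in Cset h i j x then swapc i j (h v) else h v.
Proof.
split=> [[i [j [x [ij [xW H]]]]]|[i [j [x [ij [xW H]]]]]]; exists i, j, x; by split.
Qed.

Lemma coloringE V0 (h : CT) : coloring G V0 h <->
  (forall v, (h v != None) = (v \in V0)) /\
  (forall u v, G u v -> h u != None -> h u != h v).
Proof.
split.
  case/andP => /forallP H1 /forallP H2; split => [v|u v Guv]; first exact: (eqP (H1 v)).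
  rewrite (eqP (H1 u)) => Hu; case Hv: (v \in V0).
    by move: (H2 u) => /forallP /(_ v); rewrite Guv Hu Hv.
  by move: (H1 v); rewrite Hv => /eqP /negbFE /eqP ->; move: Hu; rewrite -(eqP (H1 u)); case: (h u).
move=> [H1 H2]; apply/andP; split; apply/forallP => u; first by rewrite H1.
apply/forallP => v; apply/implyP => /and3P [Guv Hu Hv]; apply: H2 => //; by rewrite H1.
Qed.

Lemma RelW (W : {set 'I_d}) x y : x \in W -> connect (Rel W) x y -> y \in W.
Proof.
move=> xW /connectP [p pp ->]; elim: p x xW pp => //= z p IH x xW /andP [/and3P [_ zW _] pp].
exact: IH.
Qed.

Lemma Rel_sym (W : {set 'I_d}) : ssrbool.symmetric (Rel W).
Proof. by move=> x y /=; rewrite Gsym andbCA. Qed.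

Lemma swapcE (i j : 'I_k) o : swapc i j o = omap (tperm i j) o.
Proof.
case: o => //= c; congr Some.
case: tpermP => [->|->|/eqP/negbTE -> /eqP/negbTE ->]; rewrite ?eqxx //.
by case: eqP => // ->.
Qed.

Lemma swapc_inj (i j : 'I_k) : injective (swapc i j).
Proof.
move=> a b; rewrite !swapcE; case: a; case: b => //= a b /Some_inj /perm_inj -> //.
Qed.

Lemma swapc_None (i j : 'I_k) (o : option 'I_k) : (swapc i j o == None) = (o == None).
Proof. by case: o. Qed.

Lemma swapc_in (i j : 'I_k) (o : option 'I_k) : ((swapc i j o == Some i) || (swapc i j o == Some j)) =
   ((o == Some i) || (o == Some j)).
Proof.
rewrite swapcE; case: o => //= c; rewrite !(inj_eq (@Some_inj _)).
case: tpermP => [->|->|/eqP/negbTE -> /eqP/negbTE ->]; rewrite ?eqxx ?orbT //.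
Qed.

Lemma step_col V0 (h h' : CT) : coloring G V0 h -> kempe_step G h h' -> coloring G V0 h'.
Proof.
move=> /coloringE [Hd Hp] /kempe_stepE [i [j [x [ij [xW H]]]]].
apply/coloringE; split => [v|u v Guv].
  by rewrite H; case: ifP => _; rewrite ?swapc_None Hd.
rewrite !H.
have CW y : y \in Cset h i j x -> y \in Wset h i j.
  by rewrite inE; apply: RelW.
case: ifP => uC; case: ifP => vC.
- rewrite swapc_None => hu; rewrite (inj_eq (@swapc_inj i j)); exact: Hp.
- move=> _; have uW := CW _ uC.
  have vW : v \notin Wset h i j.
    apply/negP => vW; move: vC; rewrite inE.
    move: uC; rewrite inE => uC.
    by rewrite (connect_trans uC) // connect1 //= uW vW.
  apply/negP => /eqP E; move: uW vW; rewrite !inE -E swapc_in => ->.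
  done.
- move=> _; have vW := CW _ vC.
  have uW : u \notin Wset h i j.
    apply/negP => uW; move: uC; rewrite inE.
    move: vC; rewrite inE => vC.
    by rewrite (connect_trans vC) // connect1 //= uW vW Gsym.
  apply/negP => /eqP E; move: uW vW; rewrite !inE E swapc_in => /negbTE ->.
  done.
- exact: Hp.
Qed.

Lemma equiv_col V0 (h h' : CT) : coloring G V0 h -> kempe_equiv G h h' -> coloring G V0 h'.
Proof.
move=> Hh E; elim: E Hh.
- by move=> ? ? ? ?; apply: step_col; eauto.
- by [].
- by move=> ? ? ? _ IH1 _ IH2 /IH1 /IH2.
Qed.


Lemma conn_pres (e : rel 'I_d) (a : pred 'I_d) x y :
  (forall u v, e u v -> a u -> a v) -> connect e x y -> a x -> a y.
Proof.
move=> H /connectP [p pp ->]; elim: p x pp => //= z p IH x /andP [exz pp] ax.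
exact: IH pp (H _ _ exz ax).
Qed.

Lemma two_vals (l1 l2 : 'I_k) (a b a' b' : option 'I_k) : l1 != l2 ->
  (a == Some l1) || (a == Some l2) -> (b == Some l1) || (b == Some l2) ->
  (a' == Some l1) || (a' == Some l2) -> (b' == Some l1) || (b' == Some l2) ->
  a != b -> a' != b' -> (a != a') = (b != b').
Proof.
move=> ne.
have ne' : (Some l1 == Some l2) = false by apply/negbTE; rewrite (inj_eq (@Some_inj _)).
have ne'' : (Some l2 == Some l1) = false by rewrite eq_sym.
by do 4! case/orP => /eqP ->; rewrite ?eqxx ?ne' ?ne''.
Qed.

Lemma two_swap (l1 l2 : 'I_k) (a a' : option 'I_k) : l1 != l2 ->
  (a == Some l1) || (a == Some l2) -> (a' == Some l1) || (a' == Some l2) ->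
  a != a' -> swapc l1 l2 a = a'.
Proof.
move=> ne.
have ne' : (Some l1 == Some l2) = false by apply/negbTE; rewrite (inj_eq (@Some_inj _)).
have ne'' : (Some l2 == Some l1) = false by rewrite eq_sym.
by do 2! case/orP => /eqP ->; rewrite ?ne' ?ne'' ?eqxx // swapcE /= ?tpermL ?tpermR.
Qed.

Lemma SW V0 (h h' : CT) (l1 l2 : 'I_k) : coloring G V0 h -> coloring G V0 h' -> l1 != l2 ->
 (forall v, ~~ ((h v == Some l1) || (h v == Some l2)) -> h' v = h v) ->
 (forall v, (h v == Some l1) || (h v == Some l2) -> (h' v == Some l1) || (h' v == Some l2)) ->
 kempe_equiv G h h'.
Proof.
wlog lt12 : l1 l2 / (l1 < l2)%N.
  move=> W Hh Hh' ne Hout Hin; case: (ltngtP l1 l2) => [lt|lt|/val_inj E]; last by rewrite E eqxx in ne.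
    exact: (W l1 l2).
  apply: (W l2 l1) => //; first by rewrite eq_sym.
    by move=> v; rewrite orbC => /Hout.
  by move=> v; rewrite orbC => /Hin; rewrite orbC.
move=> + Hh' ne.
suff: forall N (h : CT), #|[set v | h v != h' v]| <= N -> coloring G V0 h ->
 (forall v, ~~ ((h v == Some l1) || (h v == Some l2)) -> h' v = h v) ->
 (forall v, (h v == Some l1) || (h v == Some l2) -> (h' v == Some l1) || (h' v == Some l2)) ->
 kempe_equiv G h h'.
  by move=> /(_ _ h (leqnn _)).
move: Hh' => /[dup] Hh' /coloringE [Hd' Hp'].
elim=> [|N IH] {}h.
  rewrite leqn0 cards_eq0 => /eqP E _ _ _.
  have -> : h = h' by apply/ffunP => v; apply/eqP/negPn; move: (in_set0 v); rewrite -E inE => ->.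
  exact: rt_refl.
move=> HN Hh Hout Hin.
case: (set_0Vmem [set v | h v != h' v]) => [E|[x]].
  have -> : h = h' by apply/ffunP => v; apply/eqP/negPn; move: (in_set0 v); rewrite -E inE => ->.
  exact: rt_refl.
rewrite inE => hx.
have xW : x \in Wset h l1 l2.
  rewrite inE; apply/negPn/negP => /Hout E; by rewrite E eqxx in hx.
move: (Hh) => /coloringE [Hd Hp].
set h1 := [ffun v => if v \in Cset h l1 l2 x then swapc l1 l2 (h v) else h v].
have st : kempe_step G h h1.
  apply/kempe_stepE; exists l1, l2, x; split => //; split => // v; by rewrite ffunE.
have Hh1 := step_col Hh st.
have CW y : y \in Cset h l1 l2 x -> y \in Wset h l1 l2.
  by rewrite inE; apply: RelW.
have key v : v \in Cset h l1 l2 x -> h1 v = h' v.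
  move=> vC; have vW := CW _ vC; rewrite ffunE vC.
  have vD : h v != h' v.
    move: vC; rewrite inE => vC.
    apply: (conn_pres (a := [pred v | h v != h' v])) vC hx.
    move=> u w /and3P [uW wW Guw] /= huw.
    rewrite -(@two_vals l1 l2 (h u) (h w) (h' u) (h' w)) //.
    - by move: uW; rewrite inE.
    - by move: wW; rewrite inE.
    - by apply: Hin; move: uW; rewrite inE.
    - by apply: Hin; move: wW; rewrite inE.
    - apply: Hp => //; move: uW; rewrite inE; by case: (h u).
    - apply: Hp' => //; have : (h' u == Some l1) || (h' u == Some l2).
        by apply: Hin; move: uW; rewrite inE.
      by case: (h' u).
  apply: two_swap => //.
  - by move: vW; rewrite inE.
  - by apply: Hin; move: vW; rewrite inE.
apply: (@rt_trans _ (@kempe_step d k G) h h1 h' (rt_step _ _ _ _ st)).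
apply: IH => //.
- rewrite -ltnS; apply: leq_trans HN; apply: proper_card; apply/properP; split.
    apply/subsetP => v; rewrite !inE; case vC: (v \in Cset h l1 l2 x).
      by rewrite key // eqxx.
    by rewrite ffunE vC.
  exists x; rewrite !inE //; rewrite key ?eqxx //.
  by rewrite inE connect0.
- move=> v; rewrite ffunE; case: ifP => vC; last exact: Hout.
  by rewrite swapc_in => /negP; move: (CW _ vC); rewrite inE.
- move=> v; rewrite ffunE; case: ifP => vC; last exact: Hin.
  by rewrite swapc_in => /Hin.
Qed.

End Kempe.

Local Close Scope ring_scope.


Section Mon.
Variables (d : nat) (G : rel 'I_d).
Hypotheses (Gsym : ssrbool.symmetric G) (Girr : irreflexive G).
Local Notation n := (nvars G).

Definition mS (S : {set 'I_d}) : 'X_{1..n} :=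
  match (insub S : option (stab G)) with
  | Some s => U_(enum_rank s)%MM
  | None => 0%MM
  end.

Definition mon k' (h : {ffun 'I_d -> option 'I_k'}) : 'X_{1..n} :=
  (\sum_(l < k') mS (colclass h l))%MM.

Lemma xS_X (K : fieldType) S : stableb G S -> xS K G S = 'X_[mS S].
Proof. by move=> st; rewrite /xS /mS insubT. Qed.

Lemma mS_at T (s : stab G) : stableb G T -> (mS T) (enum_rank s) = (T == val s).
Proof.
move=> st; rewrite /mS insubT mnm1E (inj_eq enum_rank_inj).
by rewrite -(inj_eq val_inj).
Qed.

Lemma class_stable k' V0 (h : {ffun 'I_d -> option 'I_k'}) l :
  coloring G V0 h -> stableb G (colclass h l).
Proof.
move=> /coloringE [_ Hp]; apply/forall_inP => u; rewrite inE => /eqP hu.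
apply/forall_inP => v; rewrite inE => /eqP hv.
apply/negP => Guv; move: (Hp u v Guv); by rewrite hu hv eqxx => /(_ isT).
Qed.

Lemma xf_X (K : fieldType) k' V0 (h : {ffun 'I_d -> option 'I_k'}) :
  coloring G V0 h -> xf K G h = 'X_[mon h].
Proof.
move=> Hh; rewrite /xf /mon.
apply: (big_ind2 (fun p m => p = 'X_[m])).
- by rewrite mpolyX0.
- by move=> ? ? ? ? -> ->; rewrite mpolyXD.
- by move=> l _; rewrite (xS_X _ (class_stable l Hh)).
Qed.

Lemma EX k' (h : {ffun 'I_d -> option 'I_k'}) (P : pred 'I_k') nu S :
  (forall l, stableb G (colclass h l)) -> stableb G S ->
  (\sum_(l | P l) mS (colclass h l))%MM = (nu + mS S)%MM ->
  exists l, P l /\ colclass h l = S.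
Proof.
move=> Hst st E.
pose s : stab G := Sub S st.
move: (congr1 (fun m : 'X_{1..n} => m (enum_rank s)) E) => /=.
rewrite mnm_sumE mnmDE mS_at //= eqxx addn1.
case: (boolP [exists l, P l && (colclass h l == S)]).
  by case/existsP => l /andP [Pl /eqP E']; exists l.
rewrite negb_exists => /forallP H.
rewrite big1 // => l Pl; rewrite mS_at //=.
by move: (H l); rewrite Pl /= => /negbTE ->.
Qed.

Lemma two_classes k' V0 (h : {ffun 'I_d -> option 'I_k'}) mu S T :
  coloring G V0 h -> stableb G S -> stableb G T ->
  mon h = (mu + mS S + mS T)%MM ->
  exists l1 l2, [/\ l1 != l2, colclass h l1 = S, colclass h l2 = T &
     mu = (\sum_(l | (l != l1) && (l != l2)) mS (colclass h l))%MM].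
Proof.
move=> Hh stS stT E.
have Hst l := class_stable l Hh.
have [l1 [_ E1]] : exists l, predT l /\ colclass h l = S.
  apply: (@EX _ _ _ (mu + mS T)%MM) => //.
  transitivity (mon h); first by [].
  by rewrite E -!addmA (addmC (mS S)).
move: E; rewrite /mon (bigD1 l1) //= E1 (addmC mu) -addmA => /addmI E.
have [l2 [ne2 E2]] : exists l, (l != l1) /\ colclass h l = T.
  by apply: (@EX _ _ _ mu) => //.
move: E; rewrite (bigD1 l2) //= E2 addmC => /addIm E.
exists l1, l2; split => //; first by rewrite eq_sym.
Qed.

End Mon.

Local Close Scope ring_scope.


Section Perm.
Variables (d k : nat) (G : rel 'I_d).
Hypotheses (Gsym : ssrbool.symmetric G) (Girr : irreflexive G).
Local Notation CT := {ffun 'I_d -> option 'I_k}.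

Lemma class_swap (h : CT) a b m :
  colclass [ffun v => omap (tperm a b) (h v)] m = colclass h (tperm a b m).
Proof.
apply/setP => v; rewrite !inE ffunE; case: (h v) => //= c.
rewrite !(inj_eq (@Some_inj _)); apply/eqP/eqP => [<-|->]; by rewrite tpermK.
Qed.

Lemma class_disj V0 (h : CT) l l' : coloring G V0 h -> l != l' ->
  colclass h l = colclass h l' -> colclass h l = set0.
Proof.
move=> _ ne E; apply/setP => v; rewrite !inE; apply: negbTE; apply/negP => /eqP hv.
have : v \in colclass h l' by rewrite -E inE hv.
by rewrite inE hv (inj_eq (@Some_inj _)) (negbTE ne).
Qed.

Definition M (h g : CT) := #|[set l | colclass h l != colclass g l]|.

Lemma swapstep V0 (h g : CT) l0 l1 : coloring G V0 h -> l0 != l1 ->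
  colclass h l1 = colclass g l0 -> colclass h l0 != colclass g l0 ->
  colclass h l1 != colclass g l1 ->
  exists h2, [/\ coloring G V0 h2, kempe_equiv G h h2, mon G h2 = mon G h & M h2 g < M h g].
Proof.
move=> Hh ne E1 N0 N1.
set h2 := [ffun v => omap (tperm l0 l1) (h v)].
move: (Hh) => /coloringE [Hd Hp].
have Hh2 : coloring G V0 h2.
  apply/coloringE; split => [v|u v Guv]; first by rewrite ffunE -Hd; case: (h v).
  rewrite !ffunE; case hu: (h u) => [a|] //= _.
  move: (Hp u v Guv); rewrite hu => /(_ isT).
  case: (h v) => //= b; rewrite !(inj_eq (@Some_inj _)).
  by rewrite (inj_eq (@perm_inj _ _)).
exists h2; split => //.
- apply: (SW Gsym Hh Hh2 ne).
  + move=> v; rewrite ffunE; case: (h v) => //= c.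
    rewrite !(inj_eq (@Some_inj _)) negb_or => /andP [c0 c1].
    by rewrite tpermD // eq_sym.
  + move=> v; rewrite ffunE; case: (h v) => //= c.
    rewrite !(inj_eq (@Some_inj _)).
    by case/orP => /eqP ->; rewrite ?tpermL ?tpermR eqxx ?orbT.
- rewrite /mon (reindex_inj (@perm_inj _ (tperm l0 l1))) /=.
  by apply: eq_bigr => m _; rewrite class_swap tpermK.
- rewrite /M; apply: proper_card; apply/properP; split.
    apply/subsetP => m; rewrite !inE class_swap.
    case: tpermP => [->|->|/eqP a /eqP b] //.
  by exists l0; rewrite !inE ?class_swap ?tpermL ?E1 ?eqxx.
Qed.

Lemma PERM V0 (h g : CT) : coloring G V0 h -> coloring G V0 g ->
  mon G h = mon G g -> kempe_equiv G h g.
Proof.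
move=> + Hg; move: (Hg) => /coloringE [Hdg Hpg].
suff: forall N (h : CT), M h g <= N -> coloring G V0 h -> mon G h = mon G g -> kempe_equiv G h g.
  by move=> /(_ _ h (leqnn _)).
elim=> [|N IH] {}h HN Hh Emon.
all: case: (set_0Vmem [set l | colclass h l != colclass g l]) => [E0|[l]].
- have -> : h = g; last exact: rt_refl.
  move: (Hh) => /coloringE [Hd Hp].
  apply/ffunP => v; case hv: (h v) => [c|].
    have : colclass h c = colclass g c.
      by apply/eqP/negPn; move: (in_set0 c); rewrite -E0 inE => ->.
    by move/setP => /(_ v); rewrite !inE hv eqxx => /esym /eqP.
  by move: (Hd v) (Hdg v); rewrite hv /= => <-; case: (g v).
- by move=> lin; move: HN; rewrite leqn0 /M cards_eq0 => /eqP E; rewrite E inE in lin.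
- have -> : h = g; last exact: rt_refl.
  move: (Hh) => /coloringE [Hd Hp].
  apply/ffunP => v; case hv: (h v) => [c|].
    have : colclass h c = colclass g c.
      by apply/eqP/negPn; move: (in_set0 c); rewrite -E0 inE => ->.
    by move/setP => /(_ v); rewrite !inE hv eqxx => /esym /eqP.
  by move: (Hd v) (Hdg v); rewrite hv /= => <-; case: (g v).
rewrite inE => Nl.
have Hsth l' := class_stable l' Hh.
have Hstg l' := class_stable l' Hg.
suff [h2 [Hh2 K2 E2 M2]] : exists h2, [/\ coloring G V0 h2, kempe_equiv G h h2,
    mon G h2 = mon G h & M h2 g < M h g].
  apply: (@rt_trans _ (@kempe_step d k G) h h2 g K2).
  by apply: IH => //; [rewrite -ltnS (leq_trans M2) | rewrite E2].
case: (eqVneq (colclass h l) set0) => [T0|T0].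
-
  have S0 : colclass g l != set0 by rewrite -T0 eq_sym.
  have [l' [_ El']] : exists l', predT l' /\ colclass h l' = colclass g l.
    apply: (@EX _ _ _ _ _ (\sum_(i | i != l) mS G (colclass g i))%MM) => //.
    transitivity (mon G h); first by [].
    by rewrite Emon /mon (bigD1 l) //= addmC.
  have nel : l != l' by apply/eqP => E; rewrite -E T0 in El'; rewrite -El' eqxx in S0.
  apply: (swapstep Hh nel El') => //.
  apply/negP => /eqP E; move: (class_disj Hg nel).
  by rewrite -E El' => /(_ erefl) /eqP; rewrite (negbTE S0).
- have [l' [_ El']] : exists l', predT l' /\ colclass g l' = colclass h l.
    apply: (@EX _ _ _ _ _ (\sum_(i | i != l) mS G (colclass h i))%MM) => //.
    transitivity (mon G g); first by [].
    by rewrite -Emon /mon (bigD1 l) //= addmC.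
  have nel : l' != l by apply/eqP => E; rewrite E in El'; rewrite El' eqxx in Nl.
  apply: (swapstep Hh nel (esym El') _ Nl).
  apply/negP => /eqP E; move: (class_disj Hh nel).
  by rewrite E El' => /(_ erefl) /eqP; rewrite (negbTE T0).
Qed.

End Perm.

Local Open Scope ring_scope.


Lemma ord2 (c : 'I_2) : c = ord0 \/ c = ord_max.
Proof. case: c => [[|[|//]]] p; [left|right]; exact/val_inj. Qed.

Lemma big2 (T : Type) (idx : T) (op : Monoid.com_law idx) (F : 'I_2 -> T) :
  \big[op/idx]_(i < 2) F i = op (F ord0) (F ord_max).
Proof.
rewrite big_ord_recr big_ord_recr big_ord0 Monoid.mul1m /=.
by congr (op (F _) (F _)); apply/val_inj.
Qed.

Section Phi.
Variables (K : fieldType) (d k : nat) (G : rel 'I_d).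
Hypotheses (Gsym : ssrbool.symmetric G) (Girr : irreflexive G).
Variables (V0 : {set 'I_d}) (f : {ffun 'I_d -> option 'I_k}).
Hypothesis Hf : coloring G V0 f.
Local Notation n := (nvars G).
Local Notation CT := {ffun 'I_d -> option 'I_k}.

Definition kb (h : CT) : bool :=
  if excluded_middle_informative (kempe_equiv G f h /\ coloring G V0 h) then true else false.

Lemma kbP h : reflect (kempe_equiv G f h /\ coloring G V0 h) (kb h).
Proof. by rewrite /kb; case: excluded_middle_informative => H; constructor. Qed.

Definition Eset : seq 'X_{1..n} := undup [seq mon G h | h <- [seq h <- enum {: CT} | kb h]].

Lemma EsetP m : reflect (exists h, kb h /\ m = mon G h) (m \in Eset).
Proof.
rewrite mem_undup; apply: (iffP mapP) => [[h]|[h [kh ->]]].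
  by rewrite mem_filter => /andP [kh _] ->; exists h.
by exists h => //; rewrite mem_filter kh mem_enum.
Qed.

Definition phi (p : {mpoly K[n]}) : K := \sum_(m <- Eset) p@_m.

Lemma phiD p q : phi (p + q) = phi p + phi q.
Proof. by rewrite /phi -big_split; apply: eq_bigr => m _; rewrite mcoeffD. Qed.

Lemma phi0 : phi 0 = 0.
Proof. by rewrite /phi big1 // => m _; rewrite mcoeff0. Qed.

Lemma phiB p q : phi (p - q) = phi p - phi q.
Proof.
rewrite /phi -sumrB; apply: eq_bigr => m _; by rewrite mcoeffB.
Qed.

Lemma phiZ c p : phi (c *: p) = c * phi p.
Proof. by rewrite /phi mulr_sumr; apply: eq_bigr => m _; rewrite mcoeffZ. Qed.

Lemma phi_sum (I : Type) (s : seq I) (F : I -> {mpoly K[n]}) :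
  phi (\sum_(i <- s) F i) = \sum_(i <- s) phi (F i).
Proof. exact: (big_morph phi phiD phi0). Qed.

Lemma phiX m : phi 'X_[m] = (m \in Eset)%:R.
Proof.
rewrite /phi; have : uniq Eset by apply: undup_uniq.
elim: Eset => [|a s IH] /=; first by rewrite big_nil.
case/andP => ns us; rewrite big_cons IH // in_cons mcoeffX.
case: (eqVneq m a) => [->|ma] /=; last by rewrite add0r.
by rewrite (negbTE ns) addr0.
Qed.

Lemma phi_mul q : (forall m, phi ('X_[m] * q) = 0) -> forall p, phi (p * q) = 0.
Proof.
move=> H p; rewrite (mpolyE p) mulr_suml phi_sum big1 // => m _.
by rewrite -scalerAl phiZ H mulr0.
Qed.

Lemma phi_ideal (P : {mpoly K[n]} -> Prop) p :
  (forall q m, P q -> phi ('X_[m] * q) = 0) -> ideal_gen P p -> phi p = 0.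
Proof.
move=> H [s [Hs ->]]; rewrite phi_sum big_seq big1 // => q qs.
by apply: phi_mul => m; apply: H; apply: Hs.
Qed.


Lemma JM (W : {set 'I_d}) (F Gc : {ffun 'I_d -> option 'I_2}) mu :
  coloring G W F -> coloring G W Gc -> (mu + mon G F)%MM \in Eset ->
  (mu + mon G Gc)%MM \in Eset.
Proof.
move=> HF HG /EsetP [h [/kbP [Kh Hh] Eh]].
have mon2 (F' : {ffun 'I_d -> option 'I_2}) :
    mon G F' = (mS G (colclass F' ord0) + mS G (colclass F' ord_max))%MM.
  by rewrite /mon big2.
have Eh' : mon G h = (mu + mS G (colclass F ord0) + mS G (colclass F ord_max))%MM.
  by rewrite -Eh mon2 addmA.
have [l1 [l2 [ne E1 E2 Emu]]] := two_classes Hh (class_stable ord0 HF)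
   (class_stable ord_max HF) Eh'.
move: HF HG => /[dup] HF /coloringE [HdF HpF] /[dup] HG /coloringE [HdG HpG].
move: (Hh) => /coloringE [Hd Hp].
have o01 : (Some (ord_max : 'I_2) == Some ord0) = false by [].
have o10 : (Some (ord0 : 'I_2) == Some ord_max) = false by [].
have ne12 : (Some l1 == Some l2) = false by rewrite (inj_eq (@Some_inj _)) (negbTE ne).
have ne21 : (Some l2 == Some l1) = false by rewrite eq_sym.
have inL v : ((h v == Some l1) || (h v == Some l2)) = (Gc v != None).
  rewrite HdG -HdF.
  have e1 : (h v == Some l1) = (F v == Some ord0) by move/setP: E1 => /(_ v); rewrite !inE.
  have e2 : (h v == Some l2) = (F v == Some ord_max) by move/setP: E2 => /(_ v); rewrite !inE.
  rewrite e1 e2; case: (F v) => [c|] //=; by case: (ord2 c) => ->; rewrite eqxx ?orbT.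
set h' : CT := [ffun v => if Gc v == Some ord0 then Some l1
                 else if Gc v == Some ord_max then Some l2 else h v].
have hN v : Gc v = None -> h' v = h v by move=> hG; rewrite ffunE hG.
have hNin v : Gc v = None -> ((h v == Some l1) = false) /\ ((h v == Some l2) = false).
  by move=> hG; move: (inL v); rewrite hG /= => /norP [/negbTE -> /negbTE ->].
have cl1 : colclass h' l1 = colclass Gc ord0.
  apply/setP => v; rewrite !inE.
  case hG: (Gc v) => [c|]; last by rewrite hN // (hNin v hG).1.
  by rewrite ffunE hG; case: (ord2 c) => -> /=; rewrite ?eqxx ?o01 ?ne21.
have cl2 : colclass h' l2 = colclass Gc ord_max.
  apply/setP => v; rewrite !inE.
  case hG: (Gc v) => [c|]; last by rewrite hN // (hNin v hG).2.
  by rewrite ffunE hG; case: (ord2 c) => -> /=; rewrite ?eqxx ?o10 ?ne12.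
have clo l : l != l1 -> l != l2 -> colclass h' l = colclass h l.
  move=> n1 n2; apply/setP => v; rewrite !inE.
  case hG: (Gc v) => [c|]; last by rewrite hN.
  have : (h v == Some l1) || (h v == Some l2) by rewrite inL hG.
  have m1 : (Some l1 == Some l) = false by rewrite (inj_eq (@Some_inj _)) eq_sym (negbTE n1).
  have m2 : (Some l2 == Some l) = false by rewrite (inj_eq (@Some_inj _)) eq_sym (negbTE n2).
  rewrite ffunE hG; case/orP => /eqP ->; case: (ord2 c) => -> /=; by rewrite ?eqxx ?o01 ?o10 ?m1 ?m2.
have Hh' : coloring G V0 h'.
  apply/coloringE; split => [v|u v Guv].
    case hG: (Gc v) => [c|]; last by rewrite hN // Hd.
    have : (h v == Some l1) || (h v == Some l2) by rewrite inL hG.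
    rewrite -Hd ffunE hG; case: (ord2 c) => -> /=; rewrite ?eqxx ?o01 /=;
      by case: (h v).
  case hu: (Gc u) => [cu|]; case hv: (Gc v) => [cv|].
  - move: (HpG u v Guv); rewrite hu hv => /(_ isT).
    rewrite !ffunE hu hv.
    by case: (ord2 cu) => ->; case: (ord2 cv) => -> /=; rewrite ?eqxx ?o01 ?o10 ?ne12 ?ne21.
  - rewrite (hN v hv) ffunE hu; have [a b] := hNin v hv.
    by case: (ord2 cu) => -> /=; rewrite ?eqxx ?o10 /= => _; rewrite eq_sym ?a ?b.
  - rewrite (hN u hu) ffunE hv; have [a b] := hNin u hu.
    by case: (ord2 cv) => -> /=; rewrite ?eqxx ?o10 /= => _; rewrite ?a ?b.
  - by rewrite (hN u hu) (hN v hv); apply: Hp.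
have K' : kempe_equiv G h h'.
  apply: (SW Gsym Hh Hh' ne).
    by move=> v; rewrite inL negbK => /eqP hG; rewrite hN.
  move=> v; rewrite inL ffunE; case hG: (Gc v) => [c|] // _.
  by case: (ord2 c) => -> /=; rewrite ?eqxx ?o01 ?orbT.
apply/EsetP; exists h'; split.
  by apply/kbP; split => //; apply: (@rt_trans _ (@kempe_step d k G) f h h').
rewrite /mon (bigD1 l1) //= (bigD1 l2) /=; last by rewrite eq_sym.
rewrite cl1 cl2 big2.
rewrite (eq_bigr (fun l => mS G (colclass h l))); last first.
  by move=> l /andP [n1 n2]; rewrite clo.
by rewrite -Emu; apply/mnmP => i; rewrite !mnmE [RHS]addnA addnC.
Qed.

Lemma MGnot mu S T : stableb G S -> stableb G T -> S :&: T != set0 ->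
  (mu + mS G S + mS G T)%MM \notin Eset.
Proof.
move=> stS stT ST; apply/negP => /EsetP [h [/kbP [_ Hh] E]].
have [l1 [l2 [ne E1 E2 _]]] := two_classes Hh stS stT (esym E).
case/set0Pn: ST => v; rewrite inE -E1 -E2 !inE => /andP [/eqP a /eqP b].
by rewrite a in b; case: b => b; rewrite b eqxx in ne.
Qed.

Lemma phiJ (q : {mpoly K[n]}) m : @JG_gen K d G q -> phi ('X_[m] * q) = 0.
Proof.
case=> W [F [Gc [HF [HG ->]]]].
rewrite mulrBr phiB (xf_X K HF) (xf_X K HG) -!mpolyXD !phiX.
have -> : ((m + mon G F)%MM \in Eset) = ((m + mon G Gc)%MM \in Eset).
  by apply/idP/idP; [apply: JM HF HG | apply: JM HG HF].
by rewrite subrr.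
Qed.

Lemma phiM (q : {mpoly K[n]}) m : @MG_gen K d G q -> phi ('X_[m] * q) = 0.
Proof.
case=> S [T [stS [stT [ST ->]]]].
by rewrite (xS_X K stS) (xS_X K stT) mulrA -!mpolyXD phiX (negbTE (MGnot _ stS stT ST)).
Qed.

Lemma phiK p : KG K G p -> phi p = 0.
Proof.
case=> a [b [Ja [Mb ->]]]; rewrite phiD (phi_ideal _ Ja) ?(phi_ideal _ Mb) ?addr0 //.
- by move=> q m; apply: phiM.
- by move=> q m; apply: phiJ.
Qed.

End Phi.

Local Open Scope ring_scope.


Section Fwd.
Variables (K : fieldType) (d k : nat) (G : rel 'I_d).
Hypotheses (Gsym : ssrbool.symmetric G) (Girr : irreflexive G).
Local Notation n := (nvars G).
Local Notation CT := {ffun 'I_d -> option 'I_k}.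

Lemma ideal_add (P : {mpoly K[n]} -> Prop) a b :
  ideal_gen P a -> ideal_gen P b -> ideal_gen P (a + b).
Proof.
move=> [s1 [H1 ->]] [s2 [H2 ->]]; exists (s1 ++ s2); split; last by rewrite big_cat.
by move=> q; rewrite mem_cat => /orP [/H1|/H2].
Qed.

Lemma ideal0 (P : {mpoly K[n]} -> Prop) : ideal_gen P 0.
Proof. by exists [::]; split => //; rewrite big_nil. Qed.

Lemma ideal1 (P : {mpoly K[n]} -> Prop) c q : P q -> ideal_gen P (c * q).
Proof.
move=> Pq; exists [:: (c, q)]; split; last by rewrite big_seq1.
by move=> q'; rewrite inE => /eqP ->.
Qed.

Lemma KG0 : KG K G 0.
Proof. by exists 0, 0; split; [apply: ideal0 | split; [apply: ideal0 | rewrite addr0]]. Qed.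

Lemma KG_add a b : KG K G a -> KG K G b -> KG K G (a + b).
Proof.
move=> [a1 [a2 [J1 [M1 ->]]]] [b1 [b2 [J2 [M2 ->]]]].
exists (a1 + b1), (a2 + b2); split; first exact: ideal_add.
split; first exact: ideal_add.
by rewrite addrACA.
Qed.

Definition Fof (i j : 'I_k) (h : CT) : {ffun 'I_d -> option 'I_2} :=
  [ffun v => if h v == Some i then Some ord0 else if h v == Some j then Some ord_max else None].

Lemma FofS i j h v c : i != j ->
  (Fof i j h v == Some c) = (h v == Some (if c == ord0 then i else j)).
Proof.
move=> ne; rewrite ffunE; case: (h v) => [a|] /=; last by case: (ord2 c) => ->.
rewrite !(inj_eq (@Some_inj _)).
case: (eqVneq a i) => [->|ai]; case: (eqVneq a j) => [aj|aj];
  case: (ord2 c) => -> //=; rewrite ?eqxx ?(inj_eq (@Some_inj _)) //.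
all: try (by rewrite eq_sym (negbTE ne)).
all: have o : ((ord_max : 'I_2) == ord0) = false by rewrite -val_eqE.
all: try subst a; rewrite ?o ?eqxx //; try rewrite (negbTE ai); try rewrite (negbTE aj); by rewrite ?o.
Qed.

Lemma Fof_col V0 i j (h : CT) : i != j -> coloring G V0 h ->
  coloring G (Wset h i j) (Fof i j h).
Proof.
move=> ne /coloringE [Hd Hp]; apply/coloringE; split => [v|u v Guv].
  by rewrite inE ffunE; case: ifP => //; case: ifP.
case Fu: (Fof i j h u) => [c|] // _; apply/negP => /eqP Fv.
have hu : h u = Some (if c == ord0 then i else j).
  by move: (@FofS i j h u c ne); rewrite Fu eqxx => /esym /eqP.
have hv : h v = Some (if c == ord0 then i else j).
  by move: (@FofS i j h v c ne); rewrite -Fv eqxx => /esym /eqP.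
by move: (Hp u v Guv); rewrite hu hv eqxx => /(_ isT).
Qed.

Lemma step_J V0 (h h' : CT) : coloring G V0 h -> kempe_step G h h' ->
  JG K G (xf K G h - xf K G h').
Proof.
move=> Hh st; have Hh' := step_col Gsym Hh st.
move: st => /kempe_stepE [i [j [x [ij [xW H]]]]].
have ne : i != j by rewrite neq_ltn ij.
have EW : Wset h' i j = Wset h i j.
  by apply/setP => v; rewrite !inE H; case: ifP => _ //; rewrite swapc_in.
have cl0 (h1 : CT) : colclass (Fof i j h1) ord0 = colclass h1 i.
  by apply/setP => v; rewrite !inE FofS.
have cl1 (h1 : CT) : colclass (Fof i j h1) ord_max = colclass h1 j.
  by apply/setP => v; rewrite !inE FofS.
have clo l : l != i -> l != j -> colclass h' l = colclass h l.
  move=> n1 n2; apply/setP => v; rewrite !inE H; case: ifP => // vC.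
  have : (h v == Some i) || (h v == Some j).
    by move: vC; rewrite inE => /(RelW xW); rewrite inE.
  case/orP => /eqP ->; rewrite swapcE /= ?tpermL ?tpermR !(inj_eq (@Some_inj _)).
    by rewrite eq_sym (negbTE n2) eq_sym (negbTE n1).
  by rewrite eq_sym (negbTE n1) eq_sym (negbTE n2).
set P := \prod_(l | (l != i) && (l != j)) xS K G (colclass h l).
have dec (h1 : CT) : (forall l, l != i -> l != j -> colclass h1 l = colclass h l) ->
    xf K G h1 = P * xf K G (Fof i j h1).
  move=> Hc; rewrite /xf (bigD1 i) // (bigD1 j) /=; last by rewrite eq_sym.
  rewrite big2 cl0 cl1 mulrA mulrC; congr (_ * _).
  by apply: eq_bigr => l /andP [n1 n2]; rewrite Hc.
rewrite (dec h) // (dec h') // -mulrBr; apply: ideal1.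
exists (Wset h i j), (Fof i j h), (Fof i j h'); split; first exact: (Fof_col ne Hh).
by split => //; rewrite -EW; apply: (Fof_col ne Hh').
Qed.

Lemma fwd V0 (h h' : CT) : coloring G V0 h -> kempe_equiv G h h' ->
  KG K G (xf K G h - xf K G h').
Proof.
move=> Hh E; elim: E Hh.
- move=> x y st Hx; exists (xf K G x - xf K G y), 0; split; first exact: (step_J Hx st).
  by split; [apply: ideal0 | rewrite addr0].
- by move=> x _; rewrite subrr; apply: KG0.
- move=> x y z Exy IH1 Eyz IH2 Hx.
  have Hy := equiv_col Gsym Hx Exy.
  have -> : xf K G x - xf K G z = (xf K G x - xf K G y) + (xf K G y - xf K G z).
    by rewrite addrA subrK.
  by apply: KG_add; [apply: IH1 | apply: IH2].
Qed.

End Fwd.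


Unset Implicit Arguments.
Set Strict Implicit.


Theorem proposition6p5 (K : fieldType) (d : nat) (G : rel 'I_d)
  (Gsym : ssrbool.symmetric G) (Girr : irreflexive G) (k : nat) (hk : (0 < k)%N)
  (V0 : {set 'I_d}) (f g : {ffun 'I_d -> option 'I_k}) :
  coloring G V0 f -> coloring G V0 g ->
  (kempe_equiv G f g <-> KG K G (xf K G f - xf K G g)).
Proof.
move=> Hf Hg; split; first by move=> E; apply: (fwd K Gsym Hf E).
move/(phiK Gsym V0 f); rewrite phiB (xf_X K Hf) (xf_X K Hg) !phiX.
have -> : mon G f \in Eset G V0 f.
  apply/EsetP; exists f; split => //; apply/kbP; split => //; exact: rt_refl.
case: (boolP (mon G g \in Eset G V0 f)) => [/EsetP [h [/kbP [Kh Hh] Eg]] _|_].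
  apply: (@rt_trans _ (@kempe_step d k G) f h g Kh).
  exact: (PERM Gsym Hh Hg (esym Eg)).
by rewrite subr0 => /eqP; rewrite oner_eq0.
Qed.
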